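(* Let $n\ge 1$ and let $G=(N,\{\Sigma_i\mid i\in N\},S,o)$ be a game form. Then its $Ł_n$-valued effectivity function $E_G$ is a truly playable $Ł_n$-valued effectivity function.
   Context: For a positive integer $n$ let $Ł_n=\{0,\frac1n,\dots,\frac{n-1}{n},1\}$ with the Łukasiewicz operations $\neg x=1-x$, $x\oplus y=\min(x+y,1)$, $x\odot y=\max(x+y-1,0)$, $x\wedge y=\min(x,y)$, $x\vee y=\max(x,y)$. For a set $S$, the operations are applied to functions in $Ł_n^S$ pointwise; $0,1$ also denote constant functions; $\chi_Y$ is the characteristic function of $Y\subseteq S$. Standing assumptions: $N$ is a finite set of players, $S$ a set of outcome states, $|N|\ge2$, $|S|\ge 2$. Subsets $C\subseteq N$ are coalitions, $\overline C=N\setminus C$. A game form is $G=(N,\{\Sigma_i\mid i\in N\},S,o)$ with nonempty strategy sets $\Sigma_i$ and outcome map $o:\prod_{i\in N}\Sigma_i\to S$; for $\sigma_C\in\prod_{i\in C}\Sigma_i$, $\sigma_{\overline C}\in\prod_{i\in\overline C}\Sigma_i$, $\sigma_C\sigma_{\overline C}$ is the combined profile. The $Ł_n$-valued effectivity function of $G$ is $E_G(C,f)=\max_{\sigma_C}\min_{\sigma_{\overline C}} f(o(\sigma_C\sigma_{\overline C}))$ for $C\subseteq N$, $f\in Ł_n^S$. An $Ł_n$-valued effectivity function is any map $E:\mathcal P N\times Ł_n^S\to Ł_n$. It is: outcome monotonic if $f\ge g$ implies $E(C,f)\ge E(C,g)$ for all $C$; $N$-maximal if $\neg E(\varnothing,\neg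 f)\le E(N,f)$ for all $f$; superadditive if $E(C_1,f)\wedge E(C_2,g)\le E(C_1\cup C_2,f\wedge g)$ whenever $C_1\cap C_2=\varnothing$; homogeneous if $E(C,f\oplus f)=E(C,f)\oplus E(C,f)$ and $E(C,f\odot f)=E(C,f)\odot E(C,f)$ for all $C,f$; has liveness if $E(C,1)=1$ for all $C$; has safety if $E(C,0)=0$ for all $C$; principal if there is $g\in Ł_n^S$ with $\{f\mid E(\varnothing,f)=1\}=\{f\mid f\ge g\odot\cdots\odot g\ (n\text{ factors})\}$. $E$ is playable if it is outcome monotonic, $N$-maximal, superadditive, homogeneous and has liveness and safety; truly playable if playable and principal. *)

(* Defs.v *)
From mathcomp Require Import all_boot.
From Stdlib Require Import ClassicalEpsilon.
Set Implicit Arguments. Unset Strict Implicit. Unset Printing Implicit Defensive.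

(* Ł_n is encoded by numerators: k : 'I_n.+1 stands for k/n. *)
Definition Ln (n : nat) := 'I_n.+1.

Section Luk.
Variable n : nat.
Definition ltop : Ln n := ord_max.
Definition lbot : Ln n := ord0.
Definition lneg (x : Ln n) : Ln n := inord (n - x).
Definition loplus (x y : Ln n) : Ln n := inord (minn (x + y) n).
Definition lodot (x y : Ln n) : Ln n := inord ((x + y) - n).
Definition lmin (x y : Ln n) : Ln n := inord (minn x y).
Definition lmax (x y : Ln n) : Ln n := inord (maxn x y).
Definition lodotn (m : nat) (x : Ln n) : Ln n := iterop m lodot x ltop.
End Luk.

Definition pb (P : Prop) : bool := if excluded_middle_informative P then true else false.

(* infimum / supremum of a set of Ł_n values (= min / max when nonempty) *)
Definition linf (n : nat) (A : Ln n -> Prop) : Ln n :=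
  inord (\max_(k : 'I_n.+1 | pb (forall a, A a -> k <= a)) k).
Definition lsup (n : nat) (A : Ln n -> Prop) : Ln n :=
  inord (\big[minn/n]_(k : 'I_n.+1 | pb (forall a, A a -> a <= k)) k).

Definition effFun (N : finType) (S : Type) (n : nat) :=
  {set N} -> (S -> Ln n) -> Ln n.

Section Props.
Variables (N : finType) (S : Type) (n : nat) (E : effFun N S n).

Definition outcome_monotonic : Prop :=
  forall C (f g : S -> Ln n), (forall s, g s <= f s) -> E C g <= E C f.
Definition N_maximal : Prop :=
  forall f : S -> Ln n, lneg (E set0 (fun s => lneg (f s))) <= E setT f.
Definition superadditive : Prop :=
  forall (C1 C2 : {set N}) (f g : S -> Ln n), [disjoint C1 & C2] ->
    lmin (E C1 f) (E C2 g) <= E (C1 :|: C2) (fun s => lmin (f s) (g s)).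
Definition homogeneous : Prop :=
  forall C (f : S -> Ln n),
    E C (fun s => loplus (f s) (f s)) = loplus (E C f) (E C f) /\
    E C (fun s => lodot (f s) (f s)) = lodot (E C f) (E C f).
Definition liveness : Prop := forall C, E C (fun _ => ltop n) = ltop n.
Definition safety : Prop := forall C, E C (fun _ => lbot n) = lbot n.
Definition principal : Prop :=
  exists g : S -> Ln n, forall f : S -> Ln n,
    E set0 f = ltop n <-> (forall s, lodotn n (g s) <= f s).
Definition playable : Prop :=
  outcome_monotonic /\ N_maximal /\ superadditive /\ homogeneous /\ liveness /\ safety.
Definition truly_playable : Prop := playable /\ principal.
End Props.

(* A strategy profile of coalition C is represented by a full profile whose
   components outside C are ignored; combination sigma_C sigma_Cbar: *)
Definition combine (N : finType) (Sigma : N -> Type) (C : {set N})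
  (s1 s2 : forall i, Sigma i) : forall i, Sigma i :=
  fun i => if i \in C then s1 i else s2 i.

Definition EG (n : nat) (N : finType) (Sigma : N -> Type) (S : Type)
  (o : (forall i, Sigma i) -> S) : effFun N S n :=
  fun C f => lsup (fun v => exists s1 : forall i, Sigma i,
     v = linf (fun w => exists s2 : forall i, Sigma i,
                  w = f (o (combine C s1 s2)))).

(* Main.v *)
Require Import Defs.
From mathcomp Require Import all_boot zify.
From Stdlib Require Import ClassicalEpsilon Classical FunctionalExtensionality.
Set Implicit Arguments. Unset Strict Implicit. Unset Printing Implicit Defensive.

Lemma pbT (P : Prop) : P -> pb P.
Proof. by rewrite /pb; case: excluded_middle_informative. Qed.
Lemma pbE (P : Prop) : pb P -> P.
Proof. by rewrite /pb; case: excluded_middle_informative. Qed.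

Lemma ord_anti m (x y : 'I_m) : x <= y -> y <= x -> x = y.
Proof. move=> h1 h2; apply: val_inj => /=; lia. Qed.

Section Inf.
Variable n : nat.

Lemma linf_val (A : Ln n -> Prop) :
  nat_of_ord (linf A) = \max_(k : 'I_n.+1 | pb (forall a, A a -> k <= a)) k.
Proof.
rewrite /linf inordK // ltnS; apply/bigmax_leqP => k _; exact: leq_ord.
Qed.

Lemma linf_lb (A : Ln n -> Prop) a : A a -> linf A <= a.
Proof.
move=> Aa; rewrite linf_val; apply/bigmax_leqP => k /pbE; apply; exact: Aa.
Qed.

Lemma linf_glb (A : Ln n -> Prop) (k : Ln n) :
  (forall a, A a -> k <= a) -> k <= linf A.
Proof. move=> h; rewrite linf_val; apply: (leq_bigmax_cond (F := fun k : 'I_n.+1 => nat_of_ord k)); exact: pbT. Qed.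

Lemma linf_in (A : Ln n -> Prop) a0 : A a0 -> A (linf A).
Proof.
move=> A0; apply: NNPP => nA.
have lt : forall a, A a -> linf A < a.
  move=> a Aa; have := linf_lb Aa; rewrite leq_eqVlt; case/orP => // /eqP e.
  by exfalso; apply: nA; have -> : linf A = a by apply: val_inj.
have b : (linf A).+1 < n.+1 by have := lt _ A0; have := leq_ord a0; lia.
have := linf_glb (k := Ordinal b) lt => /=; lia.
Qed.

Lemma bigmin_le (r : seq 'I_n.+1) (P : pred 'I_n.+1) (k : 'I_n.+1) :
  k \in r -> P k -> \big[minn/n]_(i <- r | P i) i <= k.
Proof.
elim: r => //= x r IH; rewrite inE big_cons; case/orP => [/eqP<- Pk| kr Pk].
  by rewrite Pk geq_minl.
case: (P x); last exact: IH.
by rewrite geq_min IH ?orbT.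
Qed.

Lemma lsup_val (A : Ln n -> Prop) :
  nat_of_ord (lsup A) = \big[minn/n]_(k : 'I_n.+1 | pb (forall a, A a -> a <= k)) k.
Proof.
rewrite /lsup inordK // ltnS; apply: (big_ind (fun x => x <= n)) => //.
  by move=> x y hx hy; rewrite geq_min hx.
by move=> k _; exact: leq_ord.
Qed.

Lemma lsup_ub (A : Ln n -> Prop) a : A a -> a <= lsup A.
Proof.
move=> Aa; rewrite lsup_val; apply: (big_ind (fun x => a <= x)).
- exact: leq_ord.
- by move=> x y hx hy; rewrite leq_min hx.
- by move=> k /pbE; apply.
Qed.

Lemma lsup_lub (A : Ln n -> Prop) (k : Ln n) :
  (forall a, A a -> a <= k) -> lsup A <= k.
Proof. move=> h; rewrite lsup_val; apply: bigmin_le; [exact: mem_index_enum | exact: pbT]. Qed.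

Lemma lsup_in (A : Ln n -> Prop) a0 : A a0 -> A (lsup A).
Proof.
move=> A0; apply: NNPP => nA.
have lt : forall a, A a -> a < lsup A.
  move=> a Aa; have := lsup_ub Aa; rewrite leq_eqVlt; case/orP => // /eqP e.
  by exfalso; apply: nA; have <- : a = lsup A by apply: val_inj.
have b : (lsup A).-1 < n.+1 by have := leq_ord (lsup A); lia.
have := lsup_lub (k := Ordinal b) (fun a Aa => (ltac:(have := lt a Aa; simpl; lia) : a <= Ordinal b)).
have := lt _ A0; simpl; lia.
Qed.

Definition mn I (F : I -> Ln n) := linf (fun w => exists i, w = F i).
Definition mx I (F : I -> Ln n) := lsup (fun w => exists i, w = F i).

Lemma mn_le I (F : I -> Ln n) i : mn F <= F i.
Proof. by apply: linf_lb; exists i. Qed.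
Lemma mn_glb I (F : I -> Ln n) (k : Ln n) : (forall i, k <= F i) -> k <= mn F.
Proof. by move=> h; apply: linf_glb => a [i ->]. Qed.
Lemma mn_att I (i0 : I) (F : I -> Ln n) : exists i, mn F = F i.
Proof. by have [i e] := linf_in (A := fun w => exists i, w = F i) (a0 := F i0) (ex_intro _ i0 erefl); exists i. Qed.
Lemma mx_ge I (F : I -> Ln n) i : F i <= mx F.
Proof. by apply: lsup_ub; exists i. Qed.
Lemma mx_lub I (F : I -> Ln n) (k : Ln n) : (forall i, F i <= k) -> mx F <= k.
Proof. by move=> h; apply: lsup_lub => a [i ->]. Qed.
Lemma mx_att I (i0 : I) (F : I -> Ln n) : exists i, mx F = F i.
Proof. by have [i e] := lsup_in (A := fun w => exists i, w = F i) (a0 := F i0) (ex_intro _ i0 erefl); exists i. Qed.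

Definition mono (h : Ln n -> Ln n) := forall x y : Ln n, x <= y -> h x <= h y.

Lemma mn_mono I (i0 : I) (F : I -> Ln n) h : mono h -> mn (fun i => h (F i)) = h (mn F).
Proof.
move=> hm; have [j ej] := mn_att i0 (fun i => h (F i)); have [i ei] := mn_att i0 F.
apply: ord_anti.
  by rewrite ei; apply: mn_le.
by rewrite ej; apply: hm; apply: mn_le.
Qed.

Lemma mx_mono I (i0 : I) (F : I -> Ln n) h : mono h -> mx (fun i => h (F i)) = h (mx F).
Proof.
move=> hm; have [j ej] := mx_att i0 (fun i => h (F i)); have [i ei] := mx_att i0 F.
apply: ord_anti.
  by rewrite ej; apply: hm; apply: mx_ge.
by rewrite ei; apply: (mx_ge (fun i => h (F i))).
Qed.

Lemma mn_const I (i0 : I) (c : Ln n) : mn (fun _ : I => c) = c.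
Proof. apply: ord_anti; [exact: mn_le i0 | exact: mn_glb]. Qed.
Lemma mx_const I (i0 : I) (c : Ln n) : mx (fun _ : I => c) = c.
Proof. apply: ord_anti; [exact: mx_lub | exact: (mx_ge _ i0)]. Qed.

End Inf.

Lemma lneg_val n (x : Ln n) : nat_of_ord (lneg x) = n - x.
Proof. by rewrite /lneg inordK // ltnS leq_subr. Qed.
Lemma lmin_val n (x y : Ln n) : nat_of_ord (lmin x y) = minn x y.
Proof. rewrite /lmin inordK //; have := leq_ord x; lia. Qed.
Lemma loplus_val n (x y : Ln n) : nat_of_ord (loplus x y) = minn (x + y) n.
Proof. rewrite /loplus inordK //; lia. Qed.
Lemma lodot_val n (x y : Ln n) : nat_of_ord (lodot x y) = x + y - n.
Proof. rewrite /lodot inordK //; have := leq_ord x; have := leq_ord y; lia. Qed.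

Lemma lodotn_top n k : lodotn k (ltop n) = ltop n.
Proof.
case: k => // k; rewrite /lodotn iteropS; elim: k => //= k ->.
apply: val_inj; move: (lodot_val (ltop n) (ltop n)) (lodot_val (lbot n) (lbot n)) => /= ? ?; lia.
Qed.
Lemma lodotn_bot n k : 1 <= k -> lodotn k (lbot n) = lbot n.
Proof.
case: k => // k _; rewrite /lodotn iteropS; elim: k => //= k ->.
apply: val_inj; move: (lodot_val (ltop n) (ltop n)) (lodot_val (lbot n) (lbot n)) => /= ? ?; lia.
Qed.

Section Game.
Variables (n : nat) (N : finType) (Sigma : N -> Type) (S : Type)
  (o : (forall i, Sigma i) -> S) (p0 : forall i, Sigma i).

Notation E := (@EG n N Sigma S o).

Lemma EGE C f : E C f = mx (fun s1 => mn (fun s2 => f (o (combine C s1 s2)))).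
Proof. by []. Qed.

Lemma combine0 (s1 s2 : forall i, Sigma i) : combine set0 s1 s2 = s2.
Proof. by apply: functional_extensionality_dep => i; rewrite /combine in_set0. Qed.
Lemma combineT (s1 s2 : forall i, Sigma i) : combine setT s1 s2 = s1.
Proof. by apply: functional_extensionality_dep => i; rewrite /combine in_setT. Qed.

Lemma EG_mono C f h : mono h -> E C (fun s => h (f s)) = h (E C f).
Proof.
move=> hm; rewrite !EGE.
have -> : (fun s1 => mn (fun s2 => h (f (o (combine C s1 s2))))) =
          (fun s1 => h (mn (fun s2 => f (o (combine C s1 s2))))).
  by apply: functional_extensionality_dep => s1; apply: mn_mono p0 _ _ hm.
exact: mx_mono p0 _ _ hm.
Qed.

Lemma EG_const C c : E C (fun _ => c) = c.
Proof.
rewrite EGE; apply: ord_anti.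
  by apply: mx_lub => s1; apply: mn_le p0.
by apply: leq_trans (mx_ge _ p0); apply: mn_glb.
Qed.

Lemma EG_om : outcome_monotonic E.
Proof.
move=> C f g hfg; rewrite !EGE.
have [s1 e1] := mx_att p0 (fun s1 => mn (fun s2 => g (o (combine C s1 s2)))).
rewrite e1; apply: leq_trans (mx_ge _ s1).
have [s2 e2] := mn_att p0 (fun s2 => f (o (combine C s1 s2))).
rewrite e2; apply: leq_trans (hfg _); exact: mn_le.
Qed.

Lemma EG_Nmax : N_maximal E.
Proof.
move=> f; rewrite lneg_val.
have h1 := mx_ge (fun s1 => mn (fun s2 => lneg (f (o (combine set0 s1 s2))))) p0.
have [s2 e2] := mn_att p0 (fun s2 => lneg (f (o (combine set0 p0 s2)))).
rewrite e2 combine0 lneg_val in h1.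
have h2 := mx_ge (fun s1 => mn (fun s2 => f (o (combine setT s1 s2)))) s2.
have h3 : f (o s2) <= mn (fun s3 => f (o (combine setT s2 s3))).
  by apply: mn_glb => s3; rewrite combineT.
rewrite -EGE in h1 h2.
have h1b : n - f (o s2) <= E set0 (fun s => lneg (f s)) := h1. have := leq_ord (f (o s2)); lia.
Qed.

Lemma EG_super : superadditive E.
Proof.
move=> C1 C2 f g dis; rewrite lmin_val.
have [s1 e1] := mx_att p0 (fun s1 => mn (fun s2 => f (o (combine C1 s1 s2)))).
have [t1 et1] := mx_att p0 (fun s1 => mn (fun s2 => g (o (combine C2 s1 s2)))).
have e1b : E C1 f = mn (fun s2 => f (o (combine C1 s1 s2))) := e1.
have et1b : E C2 g = mn (fun s2 => g (o (combine C2 t1 s2))) := et1.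
rewrite e1b et1b.
set u := combine C1 s1 t1.
rewrite EGE; apply: leq_trans (mx_ge _ u).
have [s2 e2] := mn_att p0 (fun s2 => lmin (f (o (combine (C1 :|: C2) u s2))) (g (o (combine (C1 :|: C2) u s2)))).
rewrite e2 lmin_val; set p := combine (C1 :|: C2) u s2.
have hp1 : p = combine C1 s1 p.
  apply: functional_extensionality_dep => i; rewrite /p /u /combine in_setU.
  by case: (i \in C1).
have hp2 : p = combine C2 t1 p.
  apply: functional_extensionality_dep => i; rewrite /p /u /combine in_setU.
  case Ci2: (i \in C2); rewrite ?orbT //.
  by have := disjointFl dis Ci2 => /= ->.
have a1 : mn (fun s3 => f (o (combine C1 s1 s3))) <= f (o p).
  by rewrite hp1; apply: mn_le.
have a2 : mn (fun s3 => g (o (combine C2 t1 s3))) <= g (o p).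
  by rewrite hp2; apply: mn_le.
rewrite leq_min !geq_min a1 a2 orbT /=; done.
Qed.

Lemma EG_homo : homogeneous E.
Proof.
move=> C f; split.
- have hm : mono (fun x : Ln n => loplus x x) by move=> x y h; rewrite !loplus_val; lia.
  exact: (EG_mono C f hm).
- have hm : mono (fun x : Ln n => lodot x x) by move=> x y h; rewrite !lodot_val; lia.
  exact: (EG_mono C f hm).
Qed.

Lemma EG_principal : 1 <= n -> principal E.
Proof.
move=> hn.
exists (fun s => if pb (exists p, o p = s) then ltop n else lbot n) => f; split.
- move=> htop s.
  case: (boolP (pb (exists p, o p = s))) => [/pbE [p <-] | _].
  + rewrite lodotn_top.
    have [s1 e1] := mx_att p0 (fun s1 => mn (fun s2 => f (o (combine set0 s1 s2)))).
    rewrite -EGE htop in e1.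
    have := mn_le (fun s2 => f (o (combine set0 s1 s2))) p.
    by rewrite -e1 combine0.
  + by rewrite lodotn_bot.
- move=> h; apply: ord_anti; first exact: leq_ord.
  rewrite EGE; apply: leq_trans (mx_ge _ p0); apply: mn_glb => s2.
  have := h (o (combine set0 p0 s2)).
  by rewrite pbT ?lodotn_top //; eexists.
Qed.

End Game.

Theorem mainTheorem1 (n : nat) (N : finType) (Sigma : N -> Type) (S : Type)
  (o : (forall i, Sigma i) -> S)
  (hn : 1 <= n) (hN : 2 <= #|N|) (hS : exists s1 s2 : S, s1 <> s2)
  (hSigma : forall i, inhabited (Sigma i)) :
  truly_playable (@EG n N Sigma S o).
Proof.
pose p0 : forall i, Sigma i := fun i => epsilon (hSigma i) (fun _ => True).
split; last exact: EG_principal p0 hn.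
split; first exact: EG_om p0.
split; first exact: EG_Nmax p0.
split; first exact: EG_super p0.
split; first exact: EG_homo p0.
split => C; exact: (@EG_const n N Sigma S o p0 C _).
Qed.
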